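(* Let $Q$ be a rational function with distinct poles $z_1,\dotsc,z_d$ ($d\ge1$) of orders $r_1,\dotsc,r_d$. Put $P=\prod_{i=1}^d(z-z_i)^{r_i}$ and $P_0=\prod_{i=1}^d(z-z_i)$, and for each $n\ge1$ write $Q^{(n)}=\frac{\alpha_nR_n}{PP_0^n}$ with $\alpha_n\in\mathbb{C}$ and $R_n\in\mathbb{C}[z]$ monic. Then $\lim_{n\to\infty}\frac{\deg R_n}{n}=d-1$. *)

(* Defs.v *)
(* complex numbers are R[i] (mathcomp-real-closed) over an
   arbitrary real type R (a model of the reals), rational functions are the
   fraction field {fraction {poly R[i]}}. *)
From HB Require Import structures.
From mathcomp Require Import all_boot all_order all_algebra.
From mathcomp Require Import fraction.
From mathcomp.real_closed Require Import complex.
From mathcomp Require Import all_classical all_reals all_analysis.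

Set Implicit Arguments.
Unset Strict Implicit.
Unset Printing Implicit Defensive.

Import Order.TTheory GRing.Theory Num.Theory.
Local Open Scope ring_scope.

Notation "x %:F" := (@FracField.tofrac _ x) : ring_scope.

(* Derivative of a rational function N/D, computed on a representative by the
   quotient rule: (N/D)' = (N' D - N D') / D^2.  (This does not depend on the
   chosen representative.) *)
Definition frac_deriv (F : fieldType) (x : {fraction {poly F}})
  : {fraction {poly F}} :=
  let N := (frac (repr x)).1 in
  let D := (frac (repr x)).2 in
  (N^`() * D - N * D^`())%:F / (D ^+ 2)%:F.

Definition frac_derivn (F : fieldType) (n : nat) (x : {fraction {poly F}}) :=
  iter n (@frac_deriv F) x.

(* Main.v *)
Require Import Defs.
From HB Require Import structures.
From mathcomp Require Import all_boot all_order all_algebra.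
From mathcomp Require Import fraction.
From mathcomp.real_closed Require Import complex.
From mathcomp Require Import all_classical all_reals all_analysis.
From mathcomp Require Import generic_quotient ring zify.
Import Order.TTheory GRing.Theory Num.Theory numFieldNormedType.Exports.
Local Open Scope classical_set_scope.
Local Open Scope ring_scope.

Set Implicit Arguments.
Unset Strict Implicit.

Lemma frac_repr (F: idomainType) (x : {fraction F}) :
  x = ((frac (repr x)).1)%:F / ((frac (repr x)).2)%:F.
Proof.
have d0 := denom_ratioP (repr x).
apply: (mulfI (x := ((frac (repr x)).2)%:F)); first by rewrite tofrac_eq0.
rewrite mulrCA mulfV ?mulr1 ?tofrac_eq0 //.
set y := repr x.
rewrite -[X in _ * X = _]reprK -/y.
unlock FracField.tofrac.
rewrite !piE.
apply/eqmodP; rewrite /= FracField.equivfE /FracField.mulf.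
rewrite !numden_Ratio ?mulf_neq0 ?oner_eq0 //.
by rewrite mul1r !mulr1 mulrC.
Qed.

Lemma frac_eqP (F : idomainType) (a b c e : {poly F}) : b != 0 -> e != 0 ->
  (a%:F / b%:F = c%:F / e%:F) <-> a * e = c * b.
Proof.
move=> b0 e0; split.
  move/eqP; rewrite eqr_div ?tofrac_eq0 // -!tofracM tofrac_eq.
  by move/eqP.
by move=> h; apply/eqP; rewrite eqr_div ?tofrac_eq0 // -!tofracM h.
Qed.

Lemma frac_deriv_eq (F : fieldType) (N D : {poly F}) : D != 0 ->
  frac_deriv (N%:F / D%:F) = (N^`() * D - N * D^`())%:F / (D ^+ 2)%:F.
Proof.
move=> D0; rewrite /frac_deriv.
set x := N%:F / D%:F.
have hx := @frac_repr _ x.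
set N0 := (frac (repr x)).1 in hx *.
set D1 := (frac (repr x)).2 in hx *.
have d1 : D1 != 0 by exact: denom_ratioP.
have e : N0 * D = N * D1.
  by apply/(frac_eqP _ _ d1 D0); rewrite -hx.
have e' : N0^`() * D + N0 * D^`() = N^`() * D1 + N * D1^`().
  by rewrite -!derivM e.
apply/frac_eqP; rewrite ?expf_neq0 //.
apply/eqP; rewrite -subr_eq0; apply/eqP.
have hX : N0^`() * D + N0 * D^`() - (N^`() * D1 + N * D1^`()) = 0 by rewrite e' subrr.
have hY : N0 * D - N * D1 = 0 by rewrite e subrr.
transitivity (D1 * D * (N0^`() * D + N0 * D^`() - (N^`() * D1 + N * D1^`()))
   - (D1^`() * D + D1 * D^`()) * (N0 * D - N * D1)); first by ring.
by rewrite hX hY !mulr0 subrr.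
Qed.

Lemma powXsubC_deriv (F : comNzRingType) (c : F) r :
  (('X - c%:P) ^+ r)^`() * ('X - c%:P) = ('X - c%:P) ^+ r *+ r.
Proof.
rewrite deriv_exp derivXsubC mul1r; case: r => [|r] /=.
  by rewrite !mulr0n mul0r.
by rewrite mulrnAl -exprSr.
Qed.

Lemma pow_deriv (F : comNzRingType) (p : {poly F}) n :
  (p ^+ n)^`() * p = p^`() * p ^+ n *+ n.
Proof.
rewrite deriv_exp; case: n => [|n] /=.
  by rewrite !mulr0n mul0r.
by rewrite mulrnAl -mulrA -exprSr.
Qed.

Lemma aux_T (R : comNzRingType) (f g Ps Qs f' Ps' T : R) (k : nat) :
  f' * g = f *+ k -> Ps' * Qs = Ps * T ->
  (f' * Ps + f * Ps') * (g * Qs) = f * Ps * (Qs *+ k + g * T).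
Proof.
move=> h1 h2.
transitivity ((f' * g) * Ps * Qs + f * g * (Ps' * Qs)); first by ring.
rewrite h1 h2; ring.
Qed.

Lemma exists_T (F : comNzRingType) (I : Type) (s : seq I) (z : I -> F) (r : I -> nat) :
  exists T, (\prod_(i <- s) ('X - (z i)%:P) ^+ r i)^`() * \prod_(i <- s) ('X - (z i)%:P)
     = (\prod_(i <- s) ('X - (z i)%:P) ^+ r i) * T.
Proof.
elim: s => [|x s [T IH]].
  by exists 0; rewrite !big_nil derivC mul0r mulr0.
eexists; rewrite !big_cons derivM.
apply: aux_T; [exact: powXsubC_deriv | exact: IH].
Qed.

Fixpoint Nseq (F : nzRingType) (P0 T A : {poly F}) (n : nat) : {poly F} :=
  match n with
  | 0 => A
  | m.+1 => P0 * (Nseq P0 T A m)^`() - (T + P0^`() *+ m) * Nseq P0 T A m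
  end.

Lemma iter_step (F : fieldType) (P P0 T A : {poly F}) n :
  P != 0 -> P0 != 0 -> P^`() * P0 = P * T ->
  iter n (@frac_deriv F) (A%:F / P%:F) = (Nseq P0 T A n)%:F / (P * P0 ^+ n)%:F.
Proof.
move=> hP hP0 hPT; elim: n => [|n IH]; first by rewrite /= expr0 mulr1.
rewrite iterS IH.
set D := P * P0 ^+ n.
have D0 : D != 0 by rewrite mulf_neq0 ?expf_neq0.
rewrite frac_deriv_eq //.
apply/frac_eqP; rewrite ?mulf_neq0 ?expf_neq0 //=.
set N := Nseq P0 T A n.
set W := T + P0^`() *+ n.
have K : D^`() * P0 = W * D.
  rewrite /D derivM mulrDl.
  have hp := pow_deriv P0 n.
  transitivity ((P^`() * P0) * P0 ^+ n + P * ((P0 ^+ n)^`() * P0)); first by ring.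
  rewrite hPT hp /W; ring.
rewrite -/N -/W exprSr mulrA -/D.
transitivity (N^`() * D * D * P0 - N * D * (D^`() * P0)); first by ring.
rewrite K; ring.
Qed.

Lemma size_mulrn_le (F : nzRingType) (p : {poly F}) n : (size (p *+ n) <= size p)%N.
Proof.
elim: n => [|n IH]; first by rewrite mulr0n size_poly0.
by rewrite mulrS (leq_trans (size_polyD _ _)) // geq_max leqnn IH.
Qed.


Lemma coefM_top (F : idomainType) (a b : {poly F}) i j :
  (size a <= i.+1)%N -> (size b <= j.+1)%N -> (a * b)`_(i + j) = a`_i * b`_j.
Proof.
move=> ha hb.
have hab := size_polyMleq a b.
case: (ltnP (size a) i.+1) => ha'.
  rewrite [a`_i]nth_default // mul0r nth_default //.
  apply: (leq_trans hab); lia.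
case: (ltnP (size b) j.+1) => hb'.
  rewrite [b`_j]nth_default // mulr0 nth_default //.
  apply: (leq_trans hab); lia.
have ea : size a = i.+1 by apply/eqP; rewrite eqn_leq ha ha'.
have eb : size b = j.+1 by apply/eqP; rewrite eqn_leq hb hb'.
have a0 : a != 0 by rewrite -size_poly_eq0 ea.
have b0 : b != 0 by rewrite -size_poly_eq0 eb.
have := lead_coefM a b; rewrite /lead_coef size_mul // ea eb.
move=> <-; by rewrite addSn addnS.
Qed.


Lemma Nstep_deg (F : numFieldType) (P0 T N : {poly F}) (n d' p : nat) :
  P0 \is monic -> size P0 = d'.+2 -> (size T <= d'.+1)%N -> T`_d' = p%:R -> N != 0 ->
  let m := (size N).-1 in
  let N1 := P0 * N^`() - (T + P0^`() *+ n) * N in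
  (size N1 <= (m + d').+1)%N /\
  N1`_(m + d') = lead_coef N * (m%:R - (p + n * d'.+1)%:R).
Proof.
move=> mP0 sP0 sT Td N0 m N1.
have sN : size N = m.+1 by rewrite /m prednK // lt0n size_poly_eq0.
have sN' : (size N^`() <= m)%N by rewrite -ltnS -sN lt_size_deriv.
have sP0' : (size P0^`() <= d'.+1)%N by rewrite -ltnS -sP0 lt_size_deriv // -size_poly_eq0 sP0.
have sW : (size (T + P0^`() *+ n)%R <= d'.+1)%N.
  by rewrite (leq_trans (size_polyD _ _)) // geq_max sT (leq_trans (size_mulrn_le _ _)).
split.
  rewrite /N1 (leq_trans (size_polyD _ _)) // size_polyN geq_max.
  apply/andP; split.
    apply: (leq_trans (size_polyMleq _ _)); rewrite sP0; lia.
  apply: (leq_trans (size_polyMleq _ _)); rewrite sN addnS /= -addnS addnC leq_add2l; exact: sW.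
rewrite /N1 coefB.
have lP : P0`_d'.+1 = 1 by move: (monicP mP0); rewrite /lead_coef sP0.
have -> : (P0 * N^`())`_(m + d') = N`_m *+ m.
  case: m sN sN' => [|m'] sN sN'.
    have -> : N^`() = 0 by apply/eqP; rewrite -size_poly_eq0; lia.
    by rewrite mulr0 coef0 mulr0n.
  rewrite addSnnS addnC coefM_top ?sP0 //.
  by rewrite coef_deriv lP mul1r.
rewrite addnC coefM_top ?sN // coefD coefMn coef_deriv lP Td.
rewrite /lead_coef sN /=.
rewrite natrD natrM; ring.
Qed.


Lemma Nseq_root (F : numFieldType) (P P0 T A U V : {poly F}) (c : F) (k : nat) :
  P = ('X - c%:P) ^+ k * U -> P0 = ('X - c%:P) * V -> (0 < k)%N ->
  U.[c] != 0 -> V.[c] != 0 -> P^`() * P0 = P * T -> A.[c] != 0 ->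
  forall n, (Nseq P0 T A n).[c] != 0.
Proof.
move=> eP eP0 k0 Uc Vc hPT Ac.
set g := 'X - c%:P.
have gc : g.[c] = 0 by rewrite /g hornerXsubC subrr.
have g0 : g ^+ k != 0 by rewrite expf_neq0 // polyXsubC_eq0.
have e1 : (U *+ k + U^`() * g) * V = U * T.
  apply: (mulfI g0).
  have hg := powXsubC_deriv c k.
  rewrite -/g in hg.
  transitivity (((g ^+ k)^`() * g) * U * V + g ^+ k * U^`() * g * V); first by rewrite hg; ring.
  rewrite [RHS]mulrA -eP -hPT eP eP0 derivM -/g; ring.
have Tc : T.[c] = V.[c] *+ k.
  have := congr1 (fun q => q.[c]) e1; rewrite /= !hornerE subrr mulr0 addr0 hornerMn.
  move=> h; apply: (mulfI Uc); rewrite -h; ring.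
have P0c : P0.[c] = 0 by rewrite eP0 hornerM gc mul0r.
have P0'c : (P0^`()).[c] = V.[c].
  by rewrite eP0 derivM /g derivXsubC mul1r hornerD hornerM -/g gc mul0r addr0.
elim => [|n IH] //=.
rewrite hornerD hornerN !hornerM P0c mul0r add0r oppr_eq0 hornerD hornerMn Tc P0'c.
rewrite -mulrnDr mulf_neq0 // mulrn_eq0 negb_or Vc andbT.
by rewrite addn_eq0 negb_and -lt0n k0.
Qed.

Lemma comb (f : nat -> nat) (p d' : nat) :
  (forall n, f n.+1 <= f n + d')%N ->
  (forall n, f n != (p + n * d'.+1)%N -> f n.+1 = (f n + d')%N) ->
  forall k, f ((f 0).+1 + k)%N = (f (f 0).+1 + k * d')%N.
Proof.
Local Open Scope nat_scope.
move=> h1 h2.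
have hb : forall n, f n <= f 0 + n * d'.
  elim=> [|n IH]; first by rewrite mul0n addn0.
  have := h1 n; nia.
set n0 := (f 0).+1.
have base : f n0 < p + n0 * d'.+1 by have := hb n0; rewrite /n0; nia.
clearbody n0.
suff : forall k, f (n0 + k) < p + (n0 + k) * d'.+1 /\ f (n0 + k) = f n0 + k * d'.
  by move=> H k; case: (H k).
elim=> [|k [IHa IHb]]; first by rewrite addn0; split; [exact: base | lia].
have e : f (n0 + k).+1 = f (n0 + k) + d' by apply: h2; rewrite neq_ltn IHa.
rewrite addnS e; split; nia.
Qed.

Unset Implicit Arguments.
Set Strict Implicit.
Local Open Scope ring_scope.

Theorem lemma4p2 (R : realType) (d : nat) (z : 'I_d -> R[i]) (r : 'I_d -> nat)
  (A : {poly R[i]}) (alpha : nat -> R[i]) (Rn : nat -> {poly R[i]}) :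
  (0 < d)%N ->
  injective z ->
  (forall i, (0 < r i)%N) ->
  (forall i, A.[z i] != 0) ->
  let P := \prod_(i < d) ('X - (z i)%:P) ^+ r i in
  let P0 := \prod_(i < d) ('X - (z i)%:P) in
  let Q := A%:F / P%:F in
  (forall n, (1 <= n)%N ->
     Rn n \is monic /\
     frac_derivn n Q = (alpha n *: Rn n)%:F / (P * P0 ^+ n)%:F) ->
  let degR_over_n : R ^nat := fun n => ((size (Rn n)).-1)%:R / n%:R in
  degR_over_n @ \oo --> (d%:R - 1 : R).
Proof.
move=> hd zinj r0 Az P P0 Q hR u.
have [T hPT] := exists_T (index_enum 'I_d) z r.
have {}hPT : P^`() * P0 = P * T := hPT.
have [d' ed] : exists d', d = d'.+1 by exists d.-1; rewrite prednK.
subst d.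
have mP0 : P0 \is monic := monic_prod_XsubC _ _ _.
have sP0 : size P0 = d'.+2.
  by rewrite size_prod_XsubC [index_enum _]unlock -enumT -cardT card_ord.
have mP : P \is monic.
  by apply: monic_prod => i _; apply: monic_exp; exact: monicXsubC.
have P0n0 : P0 != 0 := monic_neq0 mP0.
have Pn0 : P != 0 := monic_neq0 mP.
have [p sP] : exists p, size P = p.+1.
  by exists (size P).-1; rewrite prednK // lt0n size_poly_eq0.
have lP : P`_p = 1 by move: (monicP mP); rewrite /lead_coef sP.
have [sT Td] : (size T <= d'.+1)%N /\ T`_d' = p%:R.
  case: (eqVneq P^`() 0) => hP'.
    have T0 : T = 0.
      by apply/eqP; move: hPT; rewrite hP' mul0r => /esym/eqP; rewrite mulf_eq0 (negbTE Pn0).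
    have p0 : p = 0%N.
      move: sP lP; case: p => // p' _ lP.
      have := coef_deriv P p'; rewrite hP' coef0 lP => /eqP; rewrite eq_sym mulrn_eq0 oner_eq0.
      by [].
    by rewrite T0 size_poly0 coef0 p0.
  have [p' ep] : exists p', p = p'.+1.
    case: (posnP p) => [p0|pp]; last by exists p.-1; rewrite prednK.
    by move: (lt_size_deriv Pn0) hP'; rewrite sP p0 ltnS leqn0 size_poly_eq0 => ->.
  have cP' : P^`()`_p' = p%:R by rewrite coef_deriv -ep lP.
  have sP' : size P^`() = p.
    apply/eqP; rewrite eqn_leq -ltnS -sP lt_size_deriv //=.
    rewrite ep ltnNge; apply/negP => h.
    move: cP'; rewrite nth_default // => /esym/eqP; rewrite pnatr_eq0 ep.
    by [].
  have Tn0 : T != 0.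
    by apply/eqP => T0; move: hPT; rewrite T0 mulr0 => /eqP; rewrite mulf_eq0 (negbTE hP') (negbTE P0n0).
  have e1 := size_Mmonic hP' mP0.
  have e2 := size_monicM mP Tn0.
  rewrite hPT e2 sP sP0 sP' in e1.
  have sT : size T = d'.+1 by move: e1; rewrite ep !addSn /= addnS => /succn_inj /eqP; rewrite eqn_add2l => /eqP.
  split; first by rewrite sT.
  have := lead_coef_Mmonic P^`() mP0; rewrite hPT lead_coef_monicM //.
  by rewrite /lead_coef sT sP' ep /= -ep cP'.
set N := Nseq P0 T A.
set U := \prod_(j < d'.+1 | j != ord0) ('X - (z j)%:P) ^+ r j.
set V := \prod_(j < d'.+1 | j != ord0) ('X - (z j)%:P).
have eP : P = ('X - (z ord0)%:P) ^+ r ord0 * U by rewrite /P (bigD1 ord0).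
have eP0 : P0 = ('X - (z ord0)%:P) * V by rewrite /P0 (bigD1 ord0).
have Uc : U.[z ord0] != 0.
  rewrite horner_prod; apply/prodf_neq0 => j hj.
  by rewrite horner_exp hornerXsubC expf_neq0 // subr_eq0 (inj_eq zinj) eq_sym.
have Vc : V.[z ord0] != 0.
  rewrite horner_prod; apply/prodf_neq0 => j hj.
  by rewrite hornerXsubC subr_eq0 (inj_eq zinj) eq_sym.
have hNc := Nseq_root eP eP0 (r0 ord0) Uc Vc hPT (Az ord0).
have Nn0 : forall n, N n != 0.
  by move=> n; apply/eqP => h; move: (hNc n); rewrite -/N h horner0 eqxx.
have hsz : forall n, (1 <= n)%N -> size (Rn n) = size (N n).
  move=> n n1; have [_ hf] := hR n n1.
  have D0 : P * P0 ^+ n != 0 by rewrite mulf_neq0 // expf_neq0.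
  have hi := @iter_step _ P P0 T A n Pn0 P0n0 hPT.
  change (frac_derivn n Q) with (iter n (@frac_deriv _) (A%:F / P%:F)) in hf.
  move: hf; rewrite hi => /esym /(frac_eqP _ _ D0 D0) /(mulIf D0) e.
  have an0 : alpha n != 0.
    apply/eqP => a0; move: e; rewrite a0 scale0r => /eqP; rewrite eq_sym (negbTE (Nn0 n)).
    by [].
  by rewrite /N -e size_scale.
set f := fun n => (size (N n)).-1.
have h1 : forall n, (f n.+1 <= f n + d')%N.
  move=> n; have [H1 H2] := @Nstep_deg _ P0 T (N n) n d' p mP0 sP0 sT Td (Nn0 n).
  rewrite /f; move: H1; rewrite -/N.
  have -> : N n.+1 = P0 * (N n)^`() - (T + P0^`() *+ n) * N n by [].
  by move=> H; rewrite -subn1 leq_subLR add1n.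
have h2 : forall n, f n != (p + n * d'.+1)%N -> f n.+1 = (f n + d')%N.
  move=> n hn; have [H1 H2] := @Nstep_deg _ P0 T (N n) n d' p mP0 sP0 sT Td (Nn0 n).
  move: H1 H2; rewrite -/N /f.
  have -> : N n.+1 = P0 * (N n)^`() - (T + P0^`() *+ n) * N n by [].
  set N1 := P0 * (N n)^`() - (T + P0^`() *+ n) * N n.
  move=> H1 H2.
  have c0 : N1`_((size (N n)).-1 + d') != 0.
    rewrite H2 mulf_neq0 ?lead_coef_eq0 ?Nn0 // subr_eq0 eqr_nat.
    exact: hn.
  have H3 : ((size (N n)).-1 + d' < size N1)%N.
    by rewrite ltnNge; apply/negP => h; move: c0; rewrite nth_default ?eqxx.
  have -> : size N1 = ((size (N n)).-1 + d').+1 by apply/eqP; rewrite eqn_leq H1 H3.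
  by [].
have hk := @comb f p d' h1 h2.
set n1 := f 0%N.
set n0 := n1.+1.
set C := f n0.
set c : R := C%:R - n0%:R * d'%:R.
have E : forall k, u (k + n0)%N = d'%:R + c * harmonic (k + n1)%N.
  move=> k; rewrite /u.
  have -> : (size (Rn (k + n0)%N)).-1 = (C + k * d')%N.
    rewrite hsz ?addnS //.
    change (f (k + n1).+1 = C + k * d')%N; rewrite -addnS addnC; exact: hk.
  rewrite /= -addnS /c -/n0.
  have hn : ((k + n0)%:R : R) != 0 by rewrite pnatr_eq0 addnS.
  rewrite !natrD !natrM; field.
  by rewrite -natrD pnatr_eq0 addnS.
rewrite -(cvg_shiftn n0).
have -> : (d'.+1%:R - 1 : R) = d'%:R + c * 0 by rewrite mulr0 addr0 -natr1 addrK.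
have -> : [sequence u (n + n0)%N]_n = (fun k => d'%:R + c * harmonic (k + n1)%N) :> (nat -> R).
  by apply/funext => k; exact: E.
apply: cvgD; first exact: cvg_cst.
apply: cvgMl_tmp.
have := @cvg_harmonic R; rewrite -(cvg_shiftn n1).
by [].
Qed.
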